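(* Let $\mathcal C$ be a small one-way category and $c_0\prec c_1$ objects of $\mathcal C$. Given a span of sets $T\xleftarrow{f}S\xrightarrow{g}\mathcal C(c_0,c_1)$, let $\mathcal D$ be the pushout of categories of $\mathbb 2[f]:\mathbb 2[S]\to\mathbb 2[T]$ along the functor $\mathbb 2[S]\to\mathcal C$ sending $0\mapsto c_0$, $1\mapsto c_1$ and acting by $g$ on morphisms. Then $\mathcal D$ has the same objects as $\mathcal C$, and for all objects $a,b$ the hom-set $\mathcal D(a,b)$ is the pushout of sets of $$\mathcal C(c_1,b)\times T\times\mathcal C(a,c_0)\xleftarrow{\ \mathrm{id}\times f\times\mathrm{id}\ }\mathcal C(c_1,b)\times S\times\mathcal C(a,c_0)\xrightarrow{\ (q,s,p)\mapsto q\circ g(s)\circ p\ }\mathcal C(a,b).$$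
   Context: A category $\mathcal C$ is one-way if (i) $\mathcal C(x,x)=\{\mathrm{id}_x\}$ for every object $x$, and (ii) the relation $x\preccurlyeq y$ defined by ''$\mathcal C(x,y)$ is nonempty'' is antisymmetric (hence a partial order); $x\prec y$ means $x\preccurlyeq y$ and $x\ne y$. For a set $S$, $\mathbb 2[S]$ is the category with two objects $0,1$, with $\mathbb 2[S](0,1)=S$, only identity endomorphisms, and no morphisms $1\to0$; a function $f:S\to T$ induces $\mathbb 2[f]$. *)

(* Defs.v *)
From Stdlib Require Import JMeq.

Record Category := MkCategory {
  Obj : Type;
  Hom : Obj -> Obj -> Type;
  idm : forall x, Hom x x;
  comp : forall x y z, Hom y z -> Hom x y -> Hom x z;
  comp_id_l : forall x y (h : Hom x y), comp x y y (idm y) h = h;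
  comp_id_r : forall x y (h : Hom x y), comp x x y h (idm x) = h;
  comp_assoc : forall w x y z (h : Hom y z) (k : Hom x y) (l : Hom w x),
      comp w y z h (comp w x y k l) = comp w x z (comp x y z h k) l
}.
Arguments Hom {C} x y : rename.
Arguments idm {C} x : rename.
Arguments comp {C} {x y z} _ _ : rename.

Record Functor (C D : Category) := MkFunctor {
  fobj : Obj C -> Obj D;
  fmor : forall x y, @Hom C x y -> @Hom D (fobj x) (fobj y);
  fmor_id : forall x, fmor x x (idm x) = idm (fobj x);
  fmor_comp : forall x y z (h : @Hom C y z) (k : @Hom C x y),
      fmor x z (comp h k) = comp (fmor y z h) (fmor x y k)
}.
Arguments fobj {C D} _ _.
Arguments fmor {C D} _ {x y} _.

Definition Fcomp {A B C : Category} (G : Functor B C) (F : Functor A B)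
  : Functor A C.
Proof.
  refine (MkFunctor A C (fun x => fobj G (fobj F x))
            (fun x y h => fmor G (fmor F h)) _ _).
  - intros x. rewrite (fmor_id _ _ F), (fmor_id _ _ G). reflexivity.
  - intros x y z h k. rewrite (fmor_comp _ _ F), (fmor_comp _ _ G). reflexivity.
Defined.

Definition feq {C D : Category} (F G : Functor C D) : Prop :=
  (forall x, fobj F x = fobj G x) /\
  (forall x y (h : @Hom C x y), JMeq (fmor F h) (fmor G h)).

Definition one_way (C : Category) : Prop :=
  (forall x (h : @Hom C x x), h = idm x) /\
  (forall x y : Obj C, inhabited (Hom x y) -> inhabited (Hom y x) -> x = y).

Definition cpreceq (C : Category) (x y : Obj C) : Prop := inhabited (@Hom C x y).
Definition cprec (C : Category) (x y : Obj C) : Prop := cpreceq C x y /\ x <> y.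

(** The category 2[S]: objects false = 0, true = 1. *)
Definition Hom2 (S : Type) (x y : bool) : Type :=
  if x then (if y then unit else Empty_set) else (if y then S else unit).

Definition id2 (S : Type) (x : bool) : Hom2 S x x :=
  if x return Hom2 S x x then tt else tt.

Definition comp2 (S : Type) (x y z : bool) : Hom2 S y z -> Hom2 S x y -> Hom2 S x z :=
  match x, y, z return Hom2 S y z -> Hom2 S x y -> Hom2 S x z with
  | false, false, false => fun _ _ => tt
  | false, false, true => fun h _ => h
  | false, true, false => fun _ _ => tt
  | false, true, true => fun _ k => k
  | true, false, _ => fun _ k => Empty_set_rect _ k
  | true, true, false => fun h _ => h
  | true, true, true => fun _ _ => tt
  end.

Definition two (S : Type) : Category.
Proof.
  refine (MkCategory bool (Hom2 S) (id2 S) (comp2 S) _ _ _).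
  - intros [|] [|] h; simpl in *; try destruct h; reflexivity.
  - intros [|] [|] h; simpl in *; try destruct h; reflexivity.
  - intros [|] [|] [|] [|] h k l; simpl in *;
      try destruct h; try destruct k; try destruct l; reflexivity.
Defined.

Definition map2 {S T : Type} (f : S -> T) (x y : bool) : Hom2 S x y -> Hom2 T x y :=
  match x, y return Hom2 S x y -> Hom2 T x y with
  | false, true => f
  | false, false => fun h => h
  | true, false => fun h => h
  | true, true => fun h => h
  end.

Definition two_map {S T : Type} (f : S -> T) : Functor (two S) (two T).
Proof.
  refine (MkFunctor (two S) (two T) (fun b => b) (map2 f) _ _).
  - intros [|]; reflexivity.
  - intros [|] [|] [|] h k; simpl in *;
      try destruct h; try destruct k; reflexivity.
Defined.

Definition Gmor {C : Category} {c0 c1 : Obj C} {S : Type} (g : S -> @Hom C c0 c1)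
  (x y : bool) : Hom2 S x y ->
      @Hom C (if x then c1 else c0) (if y then c1 else c0) :=
  match x, y return Hom2 S x y ->
      @Hom C (if x then c1 else c0) (if y then c1 else c0) with
  | false, false => fun _ => idm c0
  | false, true => g
  | true, false => fun h => Empty_set_rect _ h
  | true, true => fun _ => idm c1
  end.

Definition Gfun {C : Category} {c0 c1 : Obj C} {S : Type} (g : S -> @Hom C c0 c1)
  : Functor (two S) C.
Proof.
  refine (MkFunctor (two S) C (fun b : bool => if b then c1 else c0) (Gmor g) _ _).
  - intros [|]; reflexivity.
  - intros [|] [|] [|] h k; simpl in *;
      try destruct h; try destruct k;
      rewrite ?comp_id_l, ?comp_id_r; reflexivity.
Defined.

Definition is_cat_pushout {A B1 B2 P : Category}
  (F1 : Functor A B1) (F2 : Functor A B2)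
  (i1 : Functor B1 P) (i2 : Functor B2 P) : Prop :=
  feq (Fcomp i1 F1) (Fcomp i2 F2) /\
  forall (E : Category) (k1 : Functor B1 E) (k2 : Functor B2 E),
    feq (Fcomp k1 F1) (Fcomp k2 F2) ->
    exists H : Functor P E,
      feq (Fcomp H i1) k1 /\ feq (Fcomp H i2) k2 /\
      forall H' : Functor P E,
        feq (Fcomp H' i1) k1 -> feq (Fcomp H' i2) k2 -> feq H' H.

Definition is_set_pushout {A B1 B2 P : Type}
  (u1 : A -> B1) (u2 : A -> B2) (v1 : B1 -> P) (v2 : B2 -> P) : Prop :=
  (forall a, v1 (u1 a) = v2 (u2 a)) /\
  forall (X : Type) (w1 : B1 -> X) (w2 : B2 -> X),
    (forall a, w1 (u1 a) = w2 (u2 a)) ->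
    exists h : P -> X,
      (forall b, h (v1 b) = w1 b) /\ (forall b, h (v2 b) = w2 b) /\
      forall h' : P -> X,
        (forall b, h' (v1 b) = w1 b) -> (forall b, h' (v2 b) = w2 b) ->
        forall p, h' p = h p.

Definition bijective {X Y : Type} (h : X -> Y) : Prop :=
  (forall x x', h x = h x' -> x = x') /\ (forall y, exists x, h x = y).

Definition hcast {C : Category} {x x' y y' : Obj C} (ex : x = x') (ey : y = y')
  (h : @Hom C x y) : @Hom C x' y' :=
  match ex in _ = x0 return @Hom C x0 y' with
  | eq_refl => match ey in _ = y0 return @Hom C x y0 with eq_refl => h end
  end.

(* Main.v *)
Require Import Defs.
From Stdlib Require Import JMeq Relation_Operators ClassicalEpsilon ProofIrrelevance
  FunctionalExtensionality PropExtensionality.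

Lemma eq_JM {A : Type} (a b : A) : a = b -> JMeq a b.
Proof. intros ->; reflexivity. Qed.

Lemma fmor_JM {A B : Category} (F : Functor A B) x y x' y'
  (h : @Hom A x y) (h' : @Hom A x' y') :
  x = x' -> y = y' -> JMeq h h' -> JMeq (fmor F h) (fmor F h').
Proof. intros <- <- Hj; apply JMeq_eq in Hj; subst; reflexivity. Qed.

Lemma comp_JM {A : Category} x y z x' y' z' (h : @Hom A y z) (k : @Hom A x y)
  (h' : @Hom A y' z') (k' : @Hom A x' y') :
  x = x' -> y = y' -> z = z' -> JMeq h h' -> JMeq k k' -> JMeq (comp h k) (comp h' k').
Proof.
  intros <- <- <- H1 H2; apply JMeq_eq in H1; apply JMeq_eq in H2; subst; reflexivity.
Qed.

Lemma hcast_JM {A : Category} x y x' y' (ex : x = x') (ey : y = y') (h : @Hom A x y) :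
  JMeq (hcast ex ey h) h.
Proof. destruct ex, ey; reflexivity. Qed.

Lemma hcast_eq {A : Category} x y x' y' (ex : x = x') (ey : y = y') (h : @Hom A x y)
  (h' : @Hom A x' y') : JMeq h h' -> hcast ex ey h = h'.
Proof. intros Hj. apply JMeq_eq. eapply JMeq_trans; [apply hcast_JM | exact Hj]. Qed.

Lemma idm_JM {A : Category} (x x' : Obj A) : x = x' -> JMeq (idm x) (idm x').
Proof. intros <-; reflexivity. Qed.

Definition IdF (A : Category) : Functor A A :=
  MkFunctor A A (fun x => x) (fun x y h => h) (fun x => eq_refl) (fun x y z h k => eq_refl).

Lemma feq_sym {A B} (F G : Functor A B) : feq F G -> feq G F.
Proof. intros [H1 H2]; split; intros; [symmetry; auto | apply JMeq_sym; auto]. Qed.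

Lemma feq_trans {A B} (F G K : Functor A B) : feq F G -> feq G K -> feq F K.
Proof.
  intros [H1 H2] [H3 H4]; split; intros.
  - rewrite H1; auto.
  - eapply JMeq_trans; eauto.
Qed.

Section Build.
Variable C : Category.
Variables c0 c1 : Obj C.
Variables S T : Type.
Variable f : S -> T.
Variable g : S -> @Hom C c0 c1.
Variable nb : forall y, @Hom C y c0 -> @Hom C c1 y -> False.

Definition R (x y : Obj C) : Type := (@Hom C x y + (@Hom C c1 y * T * @Hom C x c0))%type.

Inductive gen (x y : Obj C) : R x y -> R x y -> Prop :=
| gen_i : forall q s p, gen x y (inr (q, f s, p)) (inl (comp q (comp (g s) p))).

Definition eqv x y := clos_refl_sym_trans (R x y) (gen x y).

Definition Q x y := { P : R x y -> Prop | exists r, P = eqv x y r }.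

Definition cls {x y} (r : R x y) : Q x y := exist _ (eqv x y r) (ex_intro _ r eq_refl).

Definition rep {x y} (q : Q x y) : R x y :=
  proj1_sig (constructive_indefinite_description _ (proj2_sig q)).

Lemma exist_eq {A : Type} (P : A -> Prop) a b (ha : P a) (hb : P b) :
  a = b -> exist P a ha = exist P b hb.
Proof. intros <-; f_equal; apply proof_irrelevance. Qed.

Lemma cls_rep x y (q : Q x y) : cls (rep q) = q.
Proof.
  destruct q as [P HP]; unfold rep, cls; simpl.
  destruct (constructive_indefinite_description _ HP) as [r Hr]; simpl.
  apply exist_eq; symmetry; exact Hr.
Qed.

Lemma cls_eq x y (r r' : R x y) : eqv x y r r' -> cls r = cls r'.
Proof.
  intros He; unfold cls; apply exist_eq.
  extensionality z; apply propositional_extensionality; split; intros Hz.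
  - eapply rst_trans; [apply rst_sym; exact He | exact Hz].
  - eapply rst_trans; [exact He | exact Hz].
Qed.

Lemma eq_cls x y (r r' : R x y) : cls r = cls r' -> eqv x y r r'.
Proof.
  intros He. apply (f_equal (@proj1_sig _ _)) in He; simpl in He.
  assert (Hr : eqv x y r r) by apply rst_refl.
  rewrite He in Hr. apply rst_sym; exact Hr.
Qed.

Lemma rep_eqv x y (r : R x y) : eqv x y (rep (cls r)) r.
Proof. apply eq_cls. apply cls_rep. Qed.

Lemma Q_ind x y (P : Q x y -> Prop) : (forall r, P (cls r)) -> forall q, P q.
Proof. intros H q; rewrite <- (cls_rep x y q); apply H. Qed.

Definition compR {x y z} (a : R y z) (b : R x y) : R x z :=
  match a, b with
  | inl h, inl k => inl (comp h k)
  | inl h, inr (q, t, p) => inr (comp h q, t, p)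
  | inr (q, t, p), inl k => inr (q, t, comp p k)
  | inr (q, t, p), inr (q', t', p') => False_rect _ (nb _ p q')
  end.

Lemma compR_resp_l x y z (a a' : R y z) (b : R x y) :
  eqv y z a a' -> eqv x z (compR a b) (compR a' b).
Proof.
  induction 1 as [a a' Hg | a | a a' _ IH | a a' a'' _ IH1 _ IH2].
  - destruct Hg as [q s p]. destruct b as [k | [[q' t'] p']]; simpl.
    + replace (comp (comp q (comp (g s) p)) k) with (comp q (comp (g s) (comp p k))).
      * apply rst_step; constructor.
      * rewrite !comp_assoc; reflexivity.
    + exfalso; exact (nb _ p q').
  - apply rst_refl.
  - apply rst_sym; exact IH.
  - eapply rst_trans; eauto.
Qed.

Lemma compR_resp_r x y z (a : R y z) (b b' : R x y) :
  eqv x y b b' -> eqv x z (compR a b) (compR a b').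
Proof.
  induction 1 as [b b' Hg | b | b b' _ IH | b b' b'' _ IH1 _ IH2].
  - destruct Hg as [q s p]. destruct a as [h | [[q0 t0] p0]]; simpl.
    + replace (comp h (comp q (comp (g s) p))) with (comp (comp h q) (comp (g s) p)).
      * apply rst_step; constructor.
      * rewrite !comp_assoc; reflexivity.
    + exfalso; exact (nb _ p0 q).
  - apply rst_refl.
  - apply rst_sym; exact IH.
  - eapply rst_trans; eauto.
Qed.

Definition compQ {x y z} (a : Q y z) (b : Q x y) : Q x z := cls (compR (rep a) (rep b)).

Lemma compQ_cls x y z (a : R y z) (b : R x y) : compQ (cls a) (cls b) = cls (compR a b).
Proof.
  unfold compQ; apply cls_eq.
  eapply rst_trans; [apply compR_resp_l, rep_eqv | apply compR_resp_r, rep_eqv].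
Qed.

Definition idQ x : Q x x := cls (inl (idm x)).

Lemma compQ_id_l x y (h : Q x y) : compQ (idQ y) h = h.
Proof.
  revert h; apply Q_ind; intros r; unfold idQ; rewrite compQ_cls; f_equal.
  destruct r as [h | [[q t] p]]; simpl; rewrite comp_id_l; reflexivity.
Qed.

Lemma compQ_id_r x y (h : Q x y) : compQ h (idQ x) = h.
Proof.
  revert h; apply Q_ind; intros r; unfold idQ; rewrite compQ_cls; f_equal.
  destruct r as [h | [[q t] p]]; simpl; rewrite comp_id_r; reflexivity.
Qed.

Lemma compQ_assoc w x y z (h : Q y z) (k : Q x y) (l : Q w x) :
  compQ h (compQ k l) = compQ (compQ h k) l.
Proof.
  revert h; apply Q_ind; intros a; revert k; apply Q_ind; intros b;
  revert l; apply Q_ind; intros c.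
  rewrite !compQ_cls; f_equal.
  destruct a as [h | [[q t] p]], b as [k | [[q' t'] p']], c as [l | [[q'' t''] p'']];
    simpl; try (rewrite comp_assoc; reflexivity); try reflexivity; exfalso.
  - exact (nb _ p' q'').
  - exact (nb _ (comp p k) q'').
  - exact (nb _ p q').
  - exact (nb _ p q').
Qed.

Definition Ecat : Category :=
  MkCategory (Obj C) Q idQ (@compQ) compQ_id_l compQ_id_r compQ_assoc.

Definition iE : Functor C Ecat.
Proof.
  refine (MkFunctor C Ecat (fun x => x) (fun x y h => cls (inl h)) _ _).
  - intros; reflexivity.
  - intros; simpl; rewrite compQ_cls; reflexivity.
Defined.

Definition jmor (x y : bool) : Hom2 T x y -> Q (if x then c1 else c0) (if y then c1 else c0) :=
  match x, y return Hom2 T x y -> Q (if x then c1 else c0) (if y then c1 else c0) with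
  | false, false => fun _ => idQ c0
  | false, true => fun t => cls (inr (idm c1, t, idm c0))
  | true, false => fun h => Empty_set_rect _ h
  | true, true => fun _ => idQ c1
  end.

Definition jE : Functor (two T) Ecat.
Proof.
  refine (MkFunctor (two T) Ecat (fun b : bool => if b then c1 else c0) jmor _ _).
  - intros [|]; reflexivity.
  - intros [|] [|] [|] h k; simpl in *; try destruct h; try destruct k;
      unfold idQ; rewrite compQ_cls; simpl; rewrite ?comp_id_l, ?comp_id_r; reflexivity.
Defined.

Lemma HcomE : feq (Fcomp jE (two_map f)) (Fcomp iE (Gfun g)).
Proof.
  split.
  - intros [|]; reflexivity.
  - intros [|] [|] h; simpl in *; try destruct h; apply eq_JM; try reflexivity.
    apply cls_eq. simpl.
    pose proof (gen_i c0 c1 (idm c1) h (idm c0)) as G.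
    rewrite comp_id_r, comp_id_l in G. apply rst_step; exact G.
Qed.


Section Kpart.
Variable D : Category.
Variable j : Functor (two T) D.
Variable i : Functor C D.
Variable e0 : fobj j false = fobj i c0.
Variable e1 : fobj j true = fobj i c1.
Variable Hgen : forall s, hcast e0 e1 (@fmor _ _ j false true (f s)) = fmor i (g s).

Definition KR {x y} (r : R x y) : @Hom D (fobj i x) (fobj i y) :=
  match r with
  | inl h => fmor i h
  | inr (q, t, p) => comp (fmor i q) (comp (hcast e0 e1 (@fmor _ _ j false true t)) (fmor i p))
  end.

Lemma KR_resp x y (r r' : R x y) : eqv x y r r' -> KR r = KR r'.
Proof.
  induction 1 as [a a' Hg | a | a a' _ IH | a a' a'' _ IH1 _ IH2]; auto.
  - destruct Hg as [q s p]; simpl. rewrite Hgen, !fmor_comp; reflexivity.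
  - congruence.
Qed.

Lemma KR_cls x y (r : R x y) : KR (rep (cls r)) = KR r.
Proof. apply KR_resp, rep_eqv. Qed.

Definition Kfun : Functor Ecat D.
Proof.
  refine (MkFunctor Ecat D (fobj i) (fun x y m => KR (rep m)) _ _).
  - intros x; simpl; unfold idQ; rewrite KR_cls; simpl; apply fmor_id.
  - intros x y z h k; simpl; revert h; apply Q_ind; intros a; revert k; apply Q_ind; intros b.
    rewrite compQ_cls, !KR_cls.
    destruct a as [h | [[q t] p]], b as [k | [[q' t'] p']]; simpl.
    + apply fmor_comp.
    + rewrite fmor_comp, !comp_assoc; reflexivity.
    + rewrite fmor_comp, !comp_assoc; reflexivity.
    + exfalso; exact (nb _ p q').
Defined.

Lemma HKR (H : Functor D Ecat)
  (HHo : forall x, fobj H (fobj i x) = x)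
  (HHm : forall x y (h : @Hom C x y), JMeq (fmor H (fmor i h)) (cls (inl h)))
  (HHjo : forall b : bool, fobj H (fobj j b) = if b then c1 else c0)
  (HHjm : forall t : T, JMeq (fmor H (@fmor _ _ j false true t)) (cls (inr (idm c1, t, idm c0))))
  x y (r : R x y) : JMeq (fmor H (KR r)) (cls r).
Proof.
  destruct r as [h | [[q t] p]]; simpl.
  - apply HHm.
  - rewrite !fmor_comp.
    assert (Ht : JMeq (fmor H (hcast e0 e1 (@fmor _ _ j false true t)))
                      (cls (inr (idm c1, t, idm c0)) : @Hom Ecat c0 c1)).
    { eapply JMeq_trans; [| apply HHjm].
      apply fmor_JM; [symmetry; exact e0 | symmetry; exact e1 | apply hcast_JM]. }
    eapply JMeq_trans.
    + apply (comp_JM (A:=Ecat)) with (h' := (cls (inl q) : @Hom Ecat c1 y))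
        (k' := @comp Ecat _ _ _ (cls (inr (idm c1, t, idm c0))) (cls (inl p))).
      * apply HHo.
      * apply HHo.
      * apply HHo.
      * apply HHm.
      * apply (comp_JM (A:=Ecat)); [apply HHo | apply HHo | apply HHo | exact Ht | apply HHm].
    + apply eq_JM. simpl. rewrite !compQ_cls. simpl. rewrite comp_id_l, comp_id_r. reflexivity.
Qed.

End Kpart.
End Build.

Theorem mainTheorem9 (C : Category) (HC : one_way C) (c0 c1 : Obj C)
  (H01 : cprec C c0 c1) (S T : Type) (f : S -> T) (g : S -> @Hom C c0 c1)
  (D : Category) (j : Functor (two T) D) (i : Functor C D)
  (Hpo : is_cat_pushout (two_map f) (Gfun g) j i) :
  bijective (fobj i) /\
  forall (a b : Obj C)
         (e0 : fobj j false = fobj i c0) (e1 : fobj j true = fobj i c1),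
    is_set_pushout
      (fun x : @Hom C c1 b * S * @Hom C a c0 =>
         let '(q, s, p) := x in (q, f s, p))
      (fun x : @Hom C c1 b * S * @Hom C a c0 =>
         let '(q, s, p) := x in comp q (comp (g s) p))
      (fun y : @Hom C c1 b * T * @Hom C a c0 =>
         let '(q, t, p) := y in
         comp (fmor i q)
              (comp (hcast e0 e1 (@fmor _ _ j false true t)) (fmor i p)))
      (fun h : @Hom C a b => fmor i h).
Proof.
  destruct Hpo as [Hcom Huniv].
  assert (nb : forall y, @Hom C y c0 -> @Hom C c1 y -> False).
  { intros y p q. destruct H01 as [[h01] hne]. apply hne.
    apply (proj2 HC); [exact (inhabits h01) | exact (inhabits (comp p q))]. }
  assert (e0' : fobj j false = fobj i c0) by exact (proj1 Hcom false).
  assert (e1' : fobj j true = fobj i c1) by exact (proj1 Hcom true).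
  assert (Hgen : forall s, hcast e0' e1' (@fmor _ _ j false true (f s)) = fmor i (g s)).
  { intros s; apply hcast_eq; exact (proj2 Hcom false true s). }
  set (E := Ecat C c0 c1 S T f g nb).
  destruct (Huniv E (jE C c0 c1 S T f g nb) (iE C c0 c1 S T f g nb) (HcomE C c0 c1 S T f g nb))
    as [H [HHj [HHi _]]].
  set (K := Kfun C c0 c1 S T f g nb D j i e0' e1' Hgen).
  assert (HHo : forall x, fobj H (fobj i x) = x) by exact (proj1 HHi).
  assert (HHm : forall x y (h : @Hom C x y), JMeq (fmor H (fmor i h)) (cls C c0 c1 S T f g (inl h) : @Hom E x y))
    by exact (proj2 HHi).
  assert (HHjo : forall b : bool, fobj H (fobj j b) = if b then c1 else c0) by exact (proj1 HHj).
  assert (HHjm : forall t : T, JMeq (fmor H (@fmor _ _ j false true t))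
             (cls C c0 c1 S T f g (inr (idm c1, t, idm c0)) : @Hom E c0 c1))
    by exact (fun t => proj2 HHj false true t).
  assert (KH : feq (Fcomp K H) (IdF D)).
  { destruct (Huniv D j i Hcom) as [H0 [_ [_ Hu]]].
    assert (A1 : feq (Fcomp (Fcomp K H) j) j).
    { split.
      - intros [|]; simpl; rewrite (HHjo _); symmetry; assumption.
      - intros x y h. eapply JMeq_trans.
        + apply (fmor_JM K); [apply HHjo | apply HHjo | exact (proj2 HHj x y h)].
        + destruct x, y; simpl in h; try destruct h; simpl.
          all: try unfold idQ; rewrite KR_cls by exact Hgen; simpl.
          * rewrite (fmor_id _ _ i). pose proof (fmor_id _ _ j true) as Fj; simpl in Fj; rewrite Fj.
            apply idm_JM; symmetry; assumption.
          * rewrite !(fmor_id _ _ i), comp_id_l, comp_id_r; apply hcast_JM.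
          * rewrite (fmor_id _ _ i). pose proof (fmor_id _ _ j false) as Fj; simpl in Fj; rewrite Fj.
            apply idm_JM; symmetry; assumption. }
    assert (A2 : feq (Fcomp (Fcomp K H) i) i).
    { split.
      - intros x; simpl; rewrite HHo; reflexivity.
      - intros x y h. eapply JMeq_trans.
        + apply (fmor_JM K); [apply HHo | apply HHo | apply HHm].
        + simpl. rewrite KR_cls by exact Hgen. reflexivity. }
    assert (A3 : feq (Fcomp (IdF D) j) j) by (split; reflexivity).
    assert (A4 : feq (Fcomp (IdF D) i) i) by (split; reflexivity).
    eapply feq_trans; [apply (Hu _ A1 A2) | apply feq_sym, (Hu _ A3 A4)]. }
  split.
  { split.
    - intros x y Hxy. rewrite <- (HHo x), <- (HHo y), Hxy; reflexivity.
    - intros d. exists (fobj H d). exact (proj1 KH d). }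
  intros a b e0 e1.
  rewrite (proof_irrelevance _ e0 e0'), (proof_irrelevance _ e1 e1'). clear e0 e1.
  assert (HK : forall r : R C c0 c1 T a b,
    hcast (C:=E) (HHo a) (HHo b) (fmor H (KR C c0 c1 T D j i e0' e1' r)) = cls C c0 c1 S T f g r).
  { intros r; apply hcast_eq. apply HKR; assumption. }
  split.
  { intros [[q s] p]. simpl. rewrite !fmor_comp, <- Hgen. reflexivity. }
  intros X w1 w2 Hw.
  set (W := fun r : R C c0 c1 T a b => match r with inl h => w2 h | inr y => w1 y end).
  assert (Wr : forall r r', eqv C c0 c1 S T f g a b r r' -> W r = W r').
  { induction 1 as [r r' Hg | r | r r' _ IH | r r' r'' _ IH1 _ IH2]; auto.
    - destruct Hg as [q s p]; simpl. exact (Hw (q, s, p)).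
    - congruence. }
  exists (fun d => W (rep C c0 c1 S T f g (hcast (C:=E) (HHo a) (HHo b) (fmor H d)))).
  split; [|split].
  - intros [[q t] p].
    change (comp (fmor i q) (comp (hcast e0' e1' (@fmor _ _ j false true t)) (fmor i p)))
      with (KR C c0 c1 T D j i e0' e1' (inr (q, t, p))).
    rewrite HK. transitivity (W (inr (q, t, p))); [apply Wr, rep_eqv | reflexivity].
  - intros h.
    change (fmor i h) with (KR C c0 c1 T D j i e0' e1' (inl h)).
    rewrite HK. transitivity (W (inl h)); [apply Wr, rep_eqv | reflexivity].
  - intros h' E1 E2 d.
    set (m := hcast (C:=E) (HHo a) (HHo b) (fmor H d)).
    assert (Hd : KR C c0 c1 T D j i e0' e1' (rep C c0 c1 S T f g m) = d).
    { apply JMeq_eq. change (JMeq (fmor K m) d).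
      eapply JMeq_trans; [| exact (proj2 KH _ _ d)].
      apply (fmor_JM K); [symmetry; apply HHo | symmetry; apply HHo | apply hcast_JM]. }
    rewrite <- Hd at 1. clearbody m. clear Hd.
    destruct (rep C c0 c1 S T f g m) as [h | [[q t] p]].
    + exact (E2 h).
    + exact (E1 (q, t, p)).
Qed.
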